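(* For every unweighted instance of the atomic two-stage facility location game and every facility placement profile $\mathbf{s}$, there exists a rounded client profile $\sigma(\mathbf{s})$.
   Context: Setting: a finite directed graph $H=(V,E)$ whose vertices are clients, all of weight $w(v)=1$ (unweighted); a finite set $F$ of facility agents; a facility placement profile $\mathbf{s}=(s_f)_{f\in F}$ with $s_f\in V$ (any feasibility restrictions on locations are irrelevant here). Let $N(v)=\{v\}\cup\{u:(v,u)\in E\}$, $N_{\mathbf{s}}(v)=\{f\in F:s_f\in N(v)\}$, $A_{\mathbf{s}}(f)=\{v: f\in N_{\mathbf{s}}(v)\}$, $A_{\mathbf{s}}(T)=\bigcup_{f\in T}A_{\mathbf{s}}(f)$, $w(X)=|X|$. A client profile $\sigma(\mathbf{s})$ assigns to each client $v$ numbers $\sigma(\mathbf{s})_{v,f}\in[0,1]$ with $\sigma(\mathbf{s})_{v,f}=0$ for $f\notin N_{\mathbf{s}}(v)$ and $\sum_f\sigma(\mathbf{s})_{v,f}=1$ whenever $N_{\mathbf{s}}(v)\neq\varnothing$. Load $\ell_f=\sum_v\sigma(\mathbf{s})_{v,f}w(v)$. Minimum neighborhood set: for nonempty $F^*\subseteq F$, $V^*\subseteq V$, $\mathrm{MNS}_{\mathbf{s}}(F^*,V^* )$ is the largest-cardinality subset among the nonempty $T\subseteq F^*$ minimizing $w(A_{\mathbf{s}}(T)\cap V^* )/|T|$. Class set: inductively, while facilities remain, $F_i=\mathrm{MNS}_{\mathbf{s}}(F\setminus\bigcup_{j<i}F_j, V\setminus\bigcup_{j<i}V_j)$, $V_i=A_{\mathbf{s}}(F_i)\setminus\bigcup_{j<i}V_j$,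 $C_i=(F_i,V_i)$, $\ell(C_i)=w(V_i)/|F_i|$. A client profile $\sigma(\mathbf{s})$ is rounded if for every class $C_i$ and every $f\in F_i$ we have $\ell_f\in\{\lfloor\ell(C_i)\rfloor,\lceil\ell(C_i)\rceil\}$, and for every class $C_i$ and every client $v\in V_i$ there is exactly one $g\in F_i$ with $\sigma(\mathbf{s})_{v,g}=1$. *)

(* Defs.v *)
From mathcomp Require Import all_boot all_order all_algebra.
Set Implicit Arguments. Unset Strict Implicit. Unset Printing Implicit Defensive.
Import Order.TTheory GRing.Theory Num.Theory.
Local Open Scope ring_scope.

Section FacilityGame.
Variables (V F : finType) (E : rel V) (s : F -> V).

Definition Nbh (v : V) : {set V} := [set u | (u == v) || E v u].
Definition Ns (v : V) : {set F} := [set f | s f \in Nbh v].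
Definition Att (f : F) : {set V} := [set v | f \in Ns v].
Definition AttS (T : {set F}) : {set V} := \bigcup_(f in T) Att f.

(* w(A_s(T) cap Vs) / #T, unweighted: w = cardinality *)
Definition nbh_ratio (T : {set F}) (Vs : {set V}) : rat :=
  #|AttS T :&: Vs|%:R / #|T|%:R.

Definition candidate (Fs : {set F}) (T : {set F}) : bool :=
  (T \subset Fs) && (T != set0).

Definition ratio_minimizer (Fs : {set F}) (Vs : {set V}) (T : {set F}) : Prop :=
  candidate Fs T /\
  forall T', candidate Fs T' -> nbh_ratio T Vs <= nbh_ratio T' Vs.

Definition is_MNS (Fs : {set F}) (Vs : {set V}) (T : {set F}) : Prop :=
  ratio_minimizer Fs Vs T /\
  forall T', ratio_minimizer Fs Vs T' -> (#|T'| <= #|T|)%N.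

(* [cs] is the class set C_1, C_2, ... computed from remaining facilities
   [Fr] and remaining clients [Vr]. *)
Fixpoint class_seq_from (Fr : {set F}) (Vr : {set V})
    (cs : seq ({set F} * {set V})) : Prop :=
  match cs with
  | [::] => Fr = set0
  | (Fi, Vi) :: cs' =>
      Fr != set0 /\ is_MNS Fr Vr Fi /\ Vi = AttS Fi :&: Vr /\
      class_seq_from (Fr :\: Fi) (Vr :\: Vi) cs'
  end.

Definition class_seq (cs : seq ({set F} * {set V})) : Prop :=
  class_seq_from setT setT cs.

Section Profiles.
Variable R : archiRealFieldType.

Definition client_profile (sigma : V -> F -> R) : Prop :=
  (forall v f, 0 <= sigma v f <= 1) /\
  (forall v f, f \notin Ns v -> sigma v f = 0) /\
  (forall v, Ns v != set0 -> \sum_(f : F) sigma v f = 1).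

(* load of f, all client weights equal to 1 *)
Definition load (sigma : V -> F -> R) (f : F) : R := \sum_(v : V) sigma v f.

Definition class_load (C : {set F} * {set V}) : R := #|C.2|%:R / #|C.1|%:R.

Definition rounded (sigma : V -> F -> R) : Prop :=
  forall cs, class_seq cs ->
  forall C, C \in cs ->
    (forall f, f \in C.1 ->
       load sigma f = (Num.floor (class_load C))%:~R \/
       load sigma f = (Num.ceil (class_load C))%:~R) /\
    (forall v, v \in C.2 -> #|[set g in C.1 | sigma v g == 1]| = 1%N).
End Profiles.
End FacilityGame.

(* Main.v *)
Require Import Defs.
From mathcomp Require Import all_boot all_order all_algebra.
From mathcomp Require Import zify.
Set Implicit Arguments. Unset Strict Implicit. Unset Printing Implicit Defensive.
Import Order.TTheory GRing.Theory Num.Theory.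

Definition nb (A B : finType) (adj : A -> B -> bool) (S : {set A}) : {set B} :=
  [set b | [exists a in S, adj a b]].

Lemma nbS (A B : finType) (adj : A -> B -> bool) (S1 S2 : {set A}) :
  S1 \subset S2 -> nb adj S1 \subset nb adj S2.
Proof.
move=> sub; apply/subsetP=> b; rewrite !inE => /existsP[a /andP[aS ab]].
by apply/existsP; exists a; rewrite (subsetP sub) // ab.
Qed.

Lemma hall (A B : finType) (b0 : B) (adj : A -> B -> bool) (Xs : {set A}) :
  (forall S : {set A}, S \subset Xs -> #|S| <= #|nb adj S|) ->
  exists h : A -> B, (forall a, a \in Xs -> adj a (h a)) /\ {in Xs &, injective h}.
Proof.
move: {2}#|Xs| (leqnn #|Xs|) => n; elim: n adj Xs => [|n IH] adj Xs leXn HS.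
  move: leXn; rewrite leqn0 cards_eq0 => /eqP ->.
  by exists (fun _ => b0); split=> [a|a1 a2]; rewrite inE.
case: (set_0Vmem Xs) => [->|[x xX]].
  by exists (fun _ => b0); split=> [a|a1 a2]; rewrite inE.
case: (boolP [exists S0 : {set A}, [&& S0 \proper Xs, S0 != set0 & #|nb adj S0| <= #|S0|]]).
- move=> /existsP[S0 /and3P[pS0 nS0 tS0]].
  have sS0 := proper_sub pS0.
  have [h1 [h1a h1i]] : exists h : A -> B, (forall a, a \in S0 -> adj a (h a)) /\ {in S0 &, injective h}.
    apply: IH; first by have := proper_card pS0; lia.
    by move=> S sS; apply: HS; apply: subset_trans sS sS0.
  pose N0 := nb adj S0.
  pose adj2 a b := adj a b && (b \notin N0).
  have [h2 [h2a h2i]] : exists h : A -> B, (forall a, a \in Xs :\: S0 -> adj2 a (h a)) /\ {in Xs :\: S0 &, injective h}.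
    apply: IH.
      rewrite cardsDS //; have: 0 < #|S0| by rewrite card_gt0.
      lia.
    move=> S sS.
    have dis : [disjoint S & S0].
      rewrite -setI_eq0; apply/eqP/setP=> a; rewrite !inE.
      apply/negP=> /andP[aS aS0]; move: (subsetP sS a aS); by rewrite inE aS0.
    have := HS (S :|: S0); rewrite subUset sS0 andbT.
    have -> : S \subset Xs by apply: subset_trans sS (subsetDl _ _).
    move=> /(_ isT); rewrite cardsU.
    move: dis; rewrite -setI_eq0 => /eqP ->; rewrite cards0 subn0.
    have sub : nb adj (S :|: S0) \subset nb adj2 S :|: N0.
      apply/subsetP=> b; rewrite !inE => /existsP[a /andP[]].
      rewrite inE => /orP[aS|aS0] ab.
        case bN: (b \in N0); first by move: bN; rewrite inE => ->; rewrite orbT.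
        by apply/orP; left; apply/existsP; exists a; rewrite aS /adj2 ab bN.
      by apply/orP; right; apply/existsP; exists a; rewrite aS0 ab.
    have := subset_leq_card sub; rewrite cardsU.
    have tN : #|N0| <= #|S0| := tS0.
    lia.
  exists (fun a => if a \in S0 then h1 a else h2 a); split.
    move=> a aX; case: ifP=> aS0; first exact: h1a.
    by have /andP[] := h2a a (ltac:(by rewrite inE aS0)).
  move=> a1 a2 a1X a2X /=.
  case: ifP=> a1S; case: ifP=> a2S.
  + exact: h1i.
  + move=> e; have /andP[_] := h2a a2 (ltac:(by rewrite inE a2S)).
    by rewrite -e inE; case/negP; apply/existsP; exists a1; rewrite a1S h1a.
  + move=> e; have /andP[_] := h2a a1 (ltac:(by rewrite inE a1S)).
    by rewrite e inE; case/negP; apply/existsP; exists a2; rewrite a2S h1a.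
  + by apply: h2i; rewrite inE ?a1S ?a2S.
- move=> /existsPn noT.
  have slack : forall S : {set A}, S \proper Xs -> S != set0 -> #|S| < #|nb adj S|.
    move=> S pS nS; have := noT S; rewrite pS nS /=; lia.
  have := HS [set x]; rewrite sub1set xX cards1 => /(_ isT).
  rewrite card_gt0 => /set0Pn[y]; rewrite inE => /existsP[x' /andP[]].
  rewrite inE => /eqP -> xy.
  pose adj2 a b := adj a b && (b != y).
  have [h2 [h2a h2i]] : exists h : A -> B, (forall a, a \in Xs :\ x -> adj2 a (h a)) /\ {in Xs :\ x &, injective h}.
    apply: IH; first by move: leXn; rewrite (cardsD1 x Xs) xX; lia.
    move=> S sS; case: (set_0Vmem S) => [->|[s sS']]; first by rewrite cards0.
    have pS : S \proper Xs.
      rewrite properE (subset_trans sS (subsetDl _ _)) /=.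
      apply/negP=> /subsetP/(_ x xX); move/(subsetP sS); by rewrite !inE eqxx.
    have := slack S pS (ltac:(by apply/set0Pn; exists s)).
    have sub : nb adj S \subset y |: nb adj2 S.
      apply/subsetP=> b; rewrite !inE => /existsP[a /andP[aS ab]].
      case: (eqVneq b y) => //= bn; apply/existsP; exists a; by rewrite aS /adj2 ab bn.
    have := subset_leq_card sub; rewrite cardsU1; lia.
  exists (fun a => if a == x then y else h2 a); split.
    move=> a aX; case: eqP=> [->//|/eqP ax].
    by have /andP[] := h2a a (ltac:(by rewrite !inE ax aX)).
  move=> a1 a2 a1X a2X /=.
  case: eqP=> [->|/eqP a1x]; case: eqP=> [->//|/eqP a2x].
  + move=> e; have /andP[_] := h2a a2 (ltac:(by rewrite !inE a2x a2X)).
    by rewrite -e eqxx.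
  + move=> e; have /andP[_] := h2a a1 (ltac:(by rewrite !inE a1x a1X)).
    by rewrite e eqxx.
  + by apply: h2i; rewrite !inE ?a1x ?a2x ?a1X ?a2X.
Qed.


Section Facts.
Variables (V F : finType) (E : rel V) (s : F -> V).

Local Notation AttS := (AttS E s).
Local Notation ratio := (nbh_ratio E s).
Implicit Types (T Fs Fr : {set F}) (Vs Vr : {set V}).

Lemma AttSP T v : reflect (exists2 f, f \in T & f \in Ns E s v) (v \in AttS T).
Proof.
apply: (iffP bigcupP) => [[f fT]|[f fT fN]]; first by rewrite inE => ?; exists f.
by exists f; rewrite // inE.
Qed.

Lemma AttS_mono (T1 T2 : {set F}) : T1 \subset T2 -> AttS T1 \subset AttS T2.
Proof.
move=> sub; apply/subsetP=> v /AttSP[f fT fN]; apply/AttSP; exists f => //.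
exact: (subsetP sub).
Qed.

Lemma ratio_le (T1 T2 : {set F}) Vs : T1 != set0 -> T2 != set0 ->
  (ratio T1 Vs <= ratio T2 Vs)%R = (#|AttS T1 :&: Vs| * #|T2| <= #|AttS T2 :&: Vs| * #|T1|)%N.
Proof.
rewrite -!card_gt0 => t1 t2; rewrite /nbh_ratio.
have t1' : (0 < #|T1|%:R :> rat)%R by rewrite ltr0n.
have t2' : (0 < #|T2|%:R :> rat)%R by rewrite ltr0n.
rewrite ler_pdivrMr // mulrAC ler_pdivlMr // -!natrM ler_nat.
by rewrite mulnC [X in (_ <= X)%N]mulnC.
Qed.

Lemma union_minimizer Fs Vs (T1 T2 : {set F}) :
  ratio_minimizer E s Fs Vs T1 -> ratio_minimizer E s Fs Vs T2 ->
  ratio_minimizer E s Fs Vs (T1 :|: T2).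
Proof.
move=> [c1 m1] [c2 m2].
move: (c1) (c2) => /andP[s1 n1] /andP[s2 n2].
have cU : candidate Fs (T1 :|: T2).
  rewrite /candidate subUset s1 s2 /=; apply/set0Pn.
  by case/set0Pn: n1 => x xT; exists x; rewrite inE xT.
split=> // T' cT'.
apply: le_trans (m1 _ cT').
have nU : T1 :|: T2 != set0 by case/andP: cU.
rewrite ratio_le //.
set a1 := #|AttS T1 :&: Vs|; set a2 := #|AttS T2 :&: Vs|.
set aU := #|AttS (T1 :|: T2) :&: Vs|; set aI := #|AttS (T1 :&: T2) :&: Vs|.
have e12 : (a1 * #|T2| = a2 * #|T1|)%N.
  apply/eqP; rewrite eqn_leq -!ratio_le //; apply/andP; split; [exact: m1|exact: m2].
have eU : aU = #|(AttS T1 :&: Vs) :|: (AttS T2 :&: Vs)|.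
  by rewrite /aU /AttS bigcup_setU setIUl.
have lI : (aI <= #|(AttS T1 :&: Vs) :&: (AttS T2 :&: Vs)|)%N.
  apply: subset_leq_card; rewrite setICA -setIA setIid setIA.
  apply: setSI; rewrite subsetI; apply/andP; split; apply: AttS_mono.
    exact: subsetIr. exact: subsetIl.
have sub : (aU + aI <= a1 + a2)%N.
  have := cardsUI (AttS T1 :&: Vs) (AttS T2 :&: Vs); rewrite -/a1 -/a2 -eU; lia.
have mI : (a1 * #|T1 :&: T2| <= aI * #|T1|)%N.
  case: (eqVneq (T1 :&: T2) set0) => [->|nI]; first by rewrite cards0 muln0.
  rewrite -ratio_le //; apply: m1.
  by rewrite /candidate nI andbT (subset_trans (subsetIl _ _) s1).
have cc := cardsUI T1 T2.
nia.
Qed.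

Lemma MNS_unique Fs Vs (T1 T2 : {set F}) : is_MNS E s Fs Vs T1 -> is_MNS E s Fs Vs T2 -> T1 = T2.
Proof.
move=> [r1 x1] [r2 x2].
have rU := union_minimizer r1 r2.
have e1 : T1 = T1 :|: T2.
  apply/eqP; rewrite eqEcard subsetUl /=; exact: x1.
have e2 : T2 = T1 :|: T2.
  apply/eqP; rewrite eqEcard subsetUr /=; exact: x2.
by rewrite e1 -e2.
Qed.

Lemma MNS_exists Fs Vs : Fs != set0 -> exists T, is_MNS E s Fs Vs T.
Proof.
move=> nF.
have cF : candidate Fs Fs by rewrite /candidate subxx nF.
case: (@Order.TotalTheory.arg_minP _ _ _ Fs (candidate Fs) (fun T => ratio T Vs) cF)
  => T0 cT0 mT0.
have rm0 : ratio_minimizer E s Fs Vs T0 by split=> // T' /mT0.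
pose P T := candidate Fs T && (ratio T Vs <= ratio T0 Vs)%R.
have PT0 : P T0 by rewrite /P cT0 lexx.
case: (@arg_maxnP _ T0 P (fun T => #|T|) PT0) => T /andP[cT lT] mT.
exists T; split.
  split=> // T' cT'; apply: le_trans lT _; exact: mT0.
move=> T' [cT' mT']; apply: mT; rewrite /P cT' /=; exact: mT'.
Qed.

Lemma class_seq_exists Fr Vr : exists cs, class_seq_from E s Fr Vr cs.
Proof.
move: {2}#|Fr| (leqnn #|Fr|) => n; elim: n Fr Vr => [|n IH] Fr Vr le.
  by exists [::]; apply/eqP; rewrite -cards_eq0; lia.
case: (eqVneq Fr set0) => [->|nF]; first by exists [::].
case: (MNS_exists Vr nF) => T mT.
have [[/andP[sT nT] _] _] := mT.
case: (IH (Fr :\: T) (Vr :\: (AttS T :&: Vr))) => [|cs Hcs].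
  rewrite cardsDS //; have : (0 < #|T|)%N by rewrite card_gt0.
  lia.
by exists ((T, AttS T :&: Vr) :: cs).
Qed.

Lemma class_seq_unique Fr Vr cs1 cs2 :
  class_seq_from E s Fr Vr cs1 -> class_seq_from E s Fr Vr cs2 -> cs1 = cs2.
Proof.
elim: cs1 Fr Vr cs2 => [|[F1 V1] cs1 IH] Fr Vr [|[F2 V2] cs2] //=.
- by move=> e [n _]; move: n; rewrite e eqxx.
- by move=> [n _] e; move: n; rewrite e eqxx.
move=> [_ [M1 [e1 H1]]] [_ [M2 [e2 H2]]].
have eF := MNS_unique M1 M2; subst F2 V1 V2.
by rewrite (IH _ _ _ H1 H2).
Qed.

Lemma class_seq_sub Fr Vr cs C : class_seq_from E s Fr Vr cs -> C \in cs ->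
  C.1 \subset Fr /\ C.2 \subset Vr.
Proof.
elim: cs Fr Vr => [|[Fi Vi] cs IH] Fr Vr //= [_ [[[/andP[sF _] _] _] [eV H]]].
rewrite inE => /orP[/eqP -> /=|Cin].
  by rewrite sF eV subsetIr.
have [a b] := IH _ _ H Cin.
by split; [apply: subset_trans a (subsetDl _ _)|apply: subset_trans b (subsetDl _ _)].
Qed.


Lemma class_assign Fr Vr Fi : ratio_minimizer E s Fr Vr Fi ->
  exists g : V -> F,
   (forall v, v \in AttS Fi :&: Vr -> g v \in Fi /\ g v \in Ns E s v) /\
   (forall f, f \in Fi ->
      #|[set v in AttS Fi :&: Vr | g v == f]| = (#|AttS Fi :&: Vr| %/ #|Fi|)%N \/
      #|[set v in AttS Fi :&: Vr | g v == f]| =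
        (if (#|AttS Fi :&: Vr| %% #|Fi| == 0)%N then (#|AttS Fi :&: Vr| %/ #|Fi|)%N
         else (#|AttS Fi :&: Vr| %/ #|Fi|).+1)).
Proof.
move=> [cFi mFi]; case/andP: (cFi) => sFi nFi.
set Vi := AttS Fi :&: Vr; set n := #|Vi|; set m := #|Fi|.
have m0 : (0 < m)%N by rewrite card_gt0.
case/set0Pn: (nFi) => f0 f0F.
have dens : forall T, T \subset Fi ->
    (n * (m - #|T|) <= #|AttS (Fi :\: T) :&: Vr| * m)%N.
  move=> T sT; case: (eqVneq (Fi :\: T) set0) => [e|ne].
    have : #|Fi :\: T| = 0%N by rewrite e cards0.
    by rewrite cardsDS // => ->; rewrite muln0.
  have := mFi (Fi :\: T); rewrite /candidate ne andbT (subset_trans (subsetDl _ _) sFi).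
  by move=> /(_ isT); rewrite ratio_le // cardsDS.
have subL : forall g : V -> F, forall f, [set v in Vi | g v == f] \subset Vi.
  by move=> g f; apply/subsetP=> v; rewrite inE => /andP[].
case: (posnP n) => [n0|npos].
  exists (fun _ => f0); split.
    by move=> v vV; have := card0_eq n0 v; rewrite vV.
  move=> f fF; left; have := subset_leq_card (subL (fun _ => f0) f).
  by rewrite -/n n0 div0n; lia.
set q := (n %/ m)%N; set r := (n %% m)%N.
set c := if r == 0%N then q else q.+1.
have nqr : n = (q * m + r)%N by apply: divn_eq.
have rm : (r < m)%N by apply: ltn_pmod.
have hc : (c = q /\ r = 0%N) \/ (c = q.+1 /\ (0 < r)%N).
  by rewrite /c; case: eqP => [->|/eqP]; [left|right; rewrite lt0n].
have c0 : (0 < c)%N by case: hc => [[-> r0]|[-> _]] //; move: npos; rewrite nqr r0; nia.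
have qc : (q <= c)%N by case: hc => [[-> _]|[-> _]].
set k := (c * m - n)%N.
have km : (k + n = c * m)%N by rewrite /k; case: hc => [[-> r0]|[-> _]]; nia.
pose b0 : (F * 'I_c)%type := (f0, Ordinal c0).
pose adj (x : (V + 'I_k)%type) (p : (F * 'I_c)%type) : bool :=
  match x with inl v => (p.1 \in Fi) && (p.1 \in Ns E s v) | inr _ => (p.1 \in Fi) && (q <= p.2)%N end.
pose Xs : {set (V + 'I_k)%type} := [set x | if x is inl v then v \in Vi else true].
pose Lq : {set 'I_c} := [set j : 'I_c | (j < q)%N].
have cLq : #|Lq| = q.
  have -> : Lq = [set widen_ord qc j | j in [set: 'I_q]].
    apply/setP=> j; rewrite !inE; apply/idP/imsetP.
      by move=> jq; exists (Ordinal jq); rewrite ?inE //; apply: val_inj.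
    by case=> j' _ ->; rewrite /= ltn_ord.
  by rewrite card_imset ?cardsT ?card_ord //; by move=> a b /(congr1 val) /= /val_inj.
have cGq : #|~: Lq| = (c - q)%N.
  have := cardsC Lq; rewrite cLq card_ord; lia.
have HS : forall S : {set (V + 'I_k)%type}, S \subset Xs -> (#|S| <= #|nb adj S|)%N.
  move=> S sS.
  set Sv := [set v | inl v \in S]; set D := [set i | inr i \in S].
  set T := [set f in Fi | [exists v in Sv, f \in Ns E s v]].
  have cS : (#|S| <= #|Sv| + #|D|)%N.
    have : S \subset inl @: Sv :|: inr @: D.
      apply/subsetP => -[v|i] xS; rewrite inE; apply/orP; [left|right];
        apply/imsetP; [exists v|exists i]; by rewrite ?inE.
    move/subset_leq_card; rewrite cardsU (card_imset _ inl_inj) (card_imset _ inr_inj); lia.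
  have sT : T \subset Fi by apply/subsetP=> f; rewrite inE => /andP[].
  have tm : (#|T| <= m)%N by apply: subset_leq_card.
  have cD : (#|D| <= k)%N by have := max_card D; rewrite card_ord.
  have dS : (#|Sv| * m <= n * #|T|)%N.
    set W := AttS (Fi :\: T) :&: Vr.
    have dW := dens T sT.
    have sW : (#|Sv| + #|W| <= n)%N.
      have dis : Sv :&: W = set0.
        apply/setP=> v; rewrite !inE; apply/negP=> /and3P[vS /AttSP[f] + fN _].
        rewrite !inE => /andP[fT fF]; case/negP: fT; rewrite fF /=.
        by apply/existsP; exists v; rewrite inE vS.
      have : Sv :|: W \subset Vi.
        rewrite subUset; apply/andP; split.
          apply/subsetP=> v; rewrite inE => vS; have := subsetP sS _ vS; by rewrite inE.
        by apply: setSI; apply: AttS_mono; apply: subsetDl.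
      move/subset_leq_card; rewrite cardsU dis cards0; lia.
    move: dW; rewrite -/W => dW.
    have h1 : (#|Sv| * m + #|W| * m <= n * m)%N by rewrite -mulnDl leq_mul2r sW orbT.
    have h2 : (n * (m - #|T|) + n * #|T| = n * m)%N by rewrite -mulnDr subnK.
    lia.
  have N1 : setX T [set: 'I_c] \subset nb adj S.
    apply/subsetP => -[f j]; rewrite in_setX in_setT andbT inE => /andP[fF /existsP[v]].
    rewrite inE => /andP[vS fN]; rewrite inE; apply/existsP; exists (inl v).
    by rewrite vS /= fF fN.
  case: (eqVneq D set0) => [D0|Dn].
    apply: leq_trans (subset_leq_card N1); rewrite cardsX cardsT card_ord.
    move: cS; rewrite D0 cards0 addn0 => cS; apply: leq_trans cS _.
    case: hc => [[-> r0]|[-> rp]]; nia.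
  have kp : (0 < k)%N by move: Dn; rewrite -card_gt0; lia.
  have [ec rp] : c = q.+1 /\ (0 < r)%N.
    case: hc => // -[ec r0]; move: kp; rewrite /k ec nqr r0; lia.
  have N2 : setX T Lq :|: setX Fi (~: Lq) \subset nb adj S.
    rewrite subUset; apply/andP; split.
      apply: subset_trans N1; apply: setXS => //; exact: subsetT.
    case/set0Pn: Dn => i; rewrite inE => iS.
    apply/subsetP => -[f j]; rewrite in_setX !inE -leqNgt => /andP[fF qj].
    by apply/existsP; exists (inr i); rewrite iS /= fF qj.
  apply: leq_trans (subset_leq_card N2).
  have dis : setX T Lq :&: setX Fi (~: Lq) = set0.
    by apply/setP => -[f j]; rewrite !inE; case: (j < q)%N; rewrite ?andbF.
  rewrite cardsU dis cards0 subn0 !cardsX cLq cGq ec.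
  apply: leq_trans cS _; nia.
have [h [ha hi]] := hall b0 HS.
pose g v := (h (inl v)).1.
exists g; split.
  move=> v vV; have := ha (inl v); rewrite inE vV => /(_ isT) /andP[].
  by rewrite /g.
move=> f fF.
set L := [set v in Vi | g v == f].
have cXs : #|Xs| = (n + k)%N.
  have -> : Xs = inl @: Vi :|: inr @: [set: 'I_k].
    apply/setP => -[v|i]; rewrite in_setU in_set /=.
      apply/idP/orP => [vV|[/imsetP[w wV [->]]//|/imsetP[? ? //]]].
      by left; apply/imsetP; exists v.
    by apply/esym/orP; right; apply/imsetP; exists i; rewrite ?in_setT.
  have dis : inl @: Vi :&: inr @: [set: 'I_k] = set0.
    by apply/setP => x; rewrite !inE; apply/negP => /andP[/imsetP[? _ ->] /imsetP[]].
  by rewrite cardsU dis cards0 subn0 (card_imset _ inl_inj) (card_imset _ inr_inj) cardsT card_ord.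
have himg : h @: Xs = setX Fi [set: 'I_c].
  apply/eqP; rewrite eqEcard; apply/andP; split.
    apply/subsetP => p /imsetP[x xX ->]; have := ha x xX.
    case: (h x) => a b; rewrite in_setX in_setT andbT; by case: x {xX} => [v|i] /andP[].
  by rewrite cardsX cardsT card_ord (card_in_imset hi) cXs; lia.
have up : (#|L| <= c)%N.
  have inj : {in L &, injective (fun v => (h (inl v)).2)}.
    move=> v w; rewrite !inE => /andP[vV /eqP gv] /andP[wV /eqP gw] e.
    have : h (inl v) = h (inl w).
      by move: gv gw e; rewrite /g; case: (h (inl v)) => a b; case: (h (inl w)) => a' b' /= -> -> ->.
    by move/hi; rewrite !inE vV wV => /(_ isT isT) [].
  by rewrite -(card_in_imset inj); have := max_card [set (h (inl v)).2 | v in L]; rewrite card_ord.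
have lo : (q <= #|L|)%N.
  have : setX [set f] Lq \subset (fun v => h (inl v)) @: L.
    apply/subsetP => -[f' j]; rewrite in_setX !inE => /andP[/eqP -> jq].
    have : (f, j) \in h @: Xs by rewrite himg in_setX fF in_setT.
    case/imsetP => -[v|i] xX e.
      apply/imsetP; exists v => //; rewrite !inE; move: xX; rewrite !inE => ->.
      by rewrite /g -e /= eqxx.
    by have := ha _ xX; rewrite -e /= => /andP[_]; rewrite leqNgt jq.
  move=> sub; have := subset_leq_card sub; rewrite cardsX cards1 cLq mul1n => H.
  by apply: leq_trans H (leq_imset_card _ _).
rewrite -/n -/m -/q -/r -/c.
case: hc => [[ec _]|[ec _]]; rewrite ec in up; lia.
Qed.

End Facts.

Local Open Scope ring_scope.

Lemma floor_ceil_div (R : archiRealFieldType) (n m : nat) : (0 < m)%N ->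
  Num.floor (n%:R / m%:R : R) = (n %/ m)%N%:Z /\
  Num.ceil (n%:R / m%:R : R) = (if (n %% m == 0)%N then (n %/ m)%N else (n %/ m).+1)%:Z.
Proof.
move=> m0.
have mR : (0 < m%:R :> R)%R by rewrite ltr0n.
have e := divn_eq n m; have rl := ltn_pmod n m0.
have cn : forall k : nat, (k%:R : R) = (k%:Z)%:~R by [].
split.
  apply: Num.Theory.floor_def.
  rewrite ler_pdivlMr // ltr_pdivrMr // !cn.
  rewrite -!intrM ler_int ltr_int; apply/andP; split; lia.
apply: Num.Theory.ceil_def.
rewrite ltr_pdivlMr // ler_pdivrMr // !cn.
rewrite -!intrM ler_int ltr_int; case: eqP => r0; apply/andP; split; lia.
Qed.

Lemma build (V F : finType) (E : rel V) (s : F -> V) cs : forall Fr Vr,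
  class_seq_from E s Fr Vr cs ->
  exists a : V -> option F,
   [/\ (forall v f, a v = Some f -> [/\ f \in Fr, v \in Vr & f \in Ns E s v]),
       (forall v f, v \in Vr -> f \in Fr -> f \in Ns E s v -> a v != None),
       (forall C, C \in cs -> forall f, f \in C.1 ->
         #|[set v | a v == Some f]| = (#|C.2| %/ #|C.1|)%N \/
         #|[set v | a v == Some f]| =
           (if (#|C.2| %% #|C.1| == 0)%N then (#|C.2| %/ #|C.1|)%N
            else (#|C.2| %/ #|C.1|).+1)) &
       (forall C, C \in cs -> forall v, v \in C.2 -> exists2 g, g \in C.1 & a v = Some g)].
Proof.
elim: cs => [|[Fi Vi] cs IH] Fr Vr /=.
  move=> ->; exists (fun _ => None); split => //.
  by move=> v f _; rewrite inE.
move=> [nF [M [eV H]]].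
have [a' [a1 a2 a3 a4]] := IH _ _ H.
have [g [g1 g2]] := class_assign M.1.
have [[/andP[sF _] _] _] := M.
have sub := class_seq_sub H.
exists (fun v => if v \in Vi then Some (g v) else a' v); split.
- move=> v f; case: ifP => vV.
    move=> [<-]; move: (vV); rewrite eV => vV'; have [gF gN] := g1 v vV'.
    by split => //; [apply: (subsetP sF) | move: vV'; rewrite inE => /andP[]].
  by move/a1 => [fF vV' fN]; split => //; [move: fF | move: vV']; rewrite inE => /andP[_ ->].
- move=> v f vV fF fN; case: ifP => // vVi; apply: (a2 v f _ _ fN).
    by rewrite inE vVi.
  rewrite inE fF andbT; apply/negP => fFi; move/negP: vVi; apply.
  by rewrite eV inE vV andbT; apply/AttSP; exists f.
- move=> C; rewrite inE => /orP[/eqP -> /= f fF|Cin f fC].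
    have -> : [set v | (if v \in Vi then Some (g v) else a' v) == Some f] =
              [set v in AttS E s Fi :&: Vr | g v == f].
      apply/setP => v; rewrite !inE -in_setI -eV; case: ifP => vV //=.
      apply/negP => /eqP /a1 [+ _ _]; by rewrite inE fF.
    by rewrite eV; apply: g2.
  have [s1 s2] := sub _ Cin.
  have fnF : f \notin Fi by move: (subsetP s1 _ fC); rewrite inE => /andP[].
  have -> : [set v | (if v \in Vi then Some (g v) else a' v) == Some f] =
            [set v | a' v == Some f].
    apply/setP => v; rewrite !inE; case: ifP => vV //=.
    have : g v \in Fi by have [] := g1 v; rewrite -?eV.
    have : a' v != Some f.
      apply/eqP => /a1 [_ + _]; by rewrite inE vV.
    move=> /negbTE -> gF; apply/eqP => -[gf]; move: fnF; by rewrite -gf gF.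
  exact: a3.
- move=> C; rewrite inE => /orP[/eqP -> /= v vV|Cin v vC].
    by rewrite vV; exists (g v) => //; have [] := g1 v; rewrite -?eV.
  have [s1 s2] := sub _ Cin.
  have : v \notin Vi by move: (subsetP s2 _ vC); rewrite inE => /andP[].
  by move/negbTE ->; apply: a4.
Qed.

Unset Implicit Arguments.

Theorem mainTheorem10 (R : archiRealFieldType) (V F : finType) (E : rel V)
    (s : F -> V) :
  exists sigma : V -> F -> R,
    client_profile E s sigma /\ rounded E s sigma.
Proof.
have [cs Hcs] := class_seq_exists E s setT setT.
have [a [a1 a2 a3 a4]] := build Hcs.
exists (fun v f => if a v == Some f then 1 else 0); split.
  split; last split.
  - by move=> v f; case: ifP => _; rewrite ?lexx ?ler01.
  - move=> v f fN; case: eqP => // /a1 [_ _ fN']; by rewrite fN' in fN.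
  - move=> v /set0Pn[f fN].
    have := a2 v f (in_setT _) (in_setT _) fN.
    case av: (a v) => [g|] // _.
    rewrite (bigD1 g) //= eqxx big1 ?addr0 // => f' nf'.
    by case: eqP => // -[gf]; move: nf'; rewrite gf eqxx.
move=> cs' Hcs'; rewrite (class_seq_unique Hcs' Hcs) => C Cin; split.
  move=> f fC.
  have m0 : (0 < #|C.1|)%N by apply/card_gt0P; exists f.
  have [fl cl] := floor_ceil_div R #|C.2| m0.
  have -> : load (fun v f => if a v == Some f then (1 : R) else 0) f =
            #|[set v | a v == Some f]|%:R.
    rewrite /load -big_mkcond /= sumr_const; congr (_ *+ _).
    by apply: eq_card => v; rewrite inE.
  rewrite /class_load fl cl.
  by case: (a3 C Cin f fC) => ->; [left|right].
move=> v vC; have [g gC av] := a4 C Cin v vC.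
have -> : [set g' in C.1 | (if a v == Some g' then (1 : R) else 0) == 1] = [set g].
  apply/setP => g'; rewrite !inE av; case: (eqVneq g' g) => [->|ng].
    by rewrite gC !eqxx.
  have -> : (Some g == Some g') = false by apply/eqP => -[e]; rewrite e eqxx in ng.
  by rewrite eq_sym oner_eq0 andbF.
by rewrite cards1.
Qed.
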